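(* For every $\varepsilon>0$ and integer $k\ge2$ there exists $\eta=\eta(\varepsilon,k,\Omega)>0$ such that for every $n>1/\eta$ every $\mu\in\mathcal P(\Omega^n)$ has pairwise disjoint $(\varepsilon,k)$-states $S_1,\dots,S_N$ such that $\mu(S_i)\ge\eta$ for all $i\in[N]$ and $\sum_{i=1}^N\mu(S_i)\ge1-\varepsilon$.
   Context: $\Omega$ is a fixed finite nonempty set, $\mathcal P(\mathcal X)$ the set of probability measures on a finite set $\mathcal X$, $\|\cdot\|_{TV}$ total variation. For $\mu\in\mathcal P(\Omega^n)$ and $S\subset\Omega^n$ with $\mu(S)>0$, $\mu[\cdot|S]$ is the conditional measure; for $x_1,\dots,x_k\in[n]$, $\mu_{\downarrow\{x_1,\dots,x_k\}}[\cdot|S]$ denotes the joint law of $(\boldsymbol\sigma(x_1),\dots,\boldsymbol\sigma(x_k))$ for $\boldsymbol\sigma\sim\mu[\cdot|S]$ and $\mu_{\downarrow x}[\cdot|S]$ the law of $\boldsymbol\sigma(x)$. A set $S\subset\Omega^n$ is an $(\varepsilon,k)$-state of $\mu$ if $\mu(S)>0$ and $\frac1{n^k}\sum_{x_1,\dots,x_k\in[n]}\|\mu_{\downarrow\{x_1,\dots,x_k\}}[\cdot|S]-\mu_{\downarrow x_1}[\cdot|S]\otimes\cdots\otimes\mu_{\downarrow x_k}[\cdot|S]\|_{TV}<\varepsilon$. *)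

(* Defs.v *)
From HB Require Import structures.
From mathcomp Require Import all_boot all_order all_algebra.
From mathcomp Require Import reals.
Set Implicit Arguments. Unset Strict Implicit. Unset Printing Implicit Defensive.
Import Order.TTheory GRing.Theory Num.Theory.
Local Open Scope ring_scope.

Section Defs.
Variables (R : realType) (Omega : finType).

Definition is_prob (X : finType) (mu : {ffun X -> R}) : Prop :=
  (forall x, 0 <= mu x) /\ \sum_(x : X) mu x = 1.

Definition meas (X : finType) (mu : {ffun X -> R}) (S : {set X}) : R :=
  \sum_(x in S) mu x.

(* total variation distance: sup_A |p(A) - q(A)| = (1/2) sum_x |p x - q x| *)
Definition tv (X : finType) (p q : {ffun X -> R}) : R :=
  2^-1 * \sum_(x : X) `|p x - q x|.

(* mu_{down {x_1,..,x_k}}[ . | S ] : joint law of (sigma(x_1),..,sigma(x_k))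
   for sigma ~ mu[ . | S ] *)
Definition cond_marg (n k : nat) (mu : {ffun {ffun 'I_n -> Omega} -> R})
  (S : {set {ffun 'I_n -> Omega}}) (xs : 'I_k -> 'I_n) :
  {ffun {ffun 'I_k -> Omega} -> R} :=
  [ffun t : {ffun 'I_k -> Omega} =>
     (\sum_(s in S | [forall j, s (xs j) == t j]) mu s) / meas mu S].

Definition cond_marg1 (n : nat) (mu : {ffun {ffun 'I_n -> Omega} -> R})
  (S : {set {ffun 'I_n -> Omega}}) (x : 'I_n) : {ffun Omega -> R} :=
  [ffun w : Omega => (\sum_(s in S | s x == w) mu s) / meas mu S].

Definition prod_marg (n k : nat) (mu : {ffun {ffun 'I_n -> Omega} -> R})
  (S : {set {ffun 'I_n -> Omega}}) (xs : 'I_k -> 'I_n) :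
  {ffun {ffun 'I_k -> Omega} -> R} :=
  [ffun t : {ffun 'I_k -> Omega} => \prod_(j < k) cond_marg1 mu S (xs j) (t j)].

Definition is_state (n : nat) (mu : {ffun {ffun 'I_n -> Omega} -> R})
  (eps : R) (k : nat) (S : {set {ffun 'I_n -> Omega}}) : Prop :=
  0 < meas mu S /\
  (n%:R ^+ k)^-1 * \sum_(xs : {ffun 'I_k -> 'I_n})
      tv (cond_marg mu S xs) (prod_marg mu S xs) < eps.

End Defs.

(* Main.v *)
Require Import Defs.
From HB Require Import structures.
From mathcomp Require Import all_boot all_order all_algebra.
From mathcomp Require Import reals.
From mathcomp Require Import ring lra.
Import Order.TTheory GRing.Theory Num.Theory.
Local Open Scope ring_scope.

Lemma sum_ind (R : realType) (T : finType) (a : T) : \sum_(x : T) ((x == a)%:R : R) = 1.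
Proof. by rewrite (bigD1 a) //= eqxx big1 ?addr0 // => x /negbTE ->. Qed.

Definition padf (Omega : finType) (k : nat) (j : 'I_k) (w0 : Omega)
  (t : {ffun 'I_k -> Omega}) : {ffun 'I_k -> Omega} :=
  [ffun i : 'I_k => if (i < j)%N then t i else w0].
Arguments padf {Omega k}.

Lemma pad_sum (R : realType) (Omega : finType) (k : nat) (j : 'I_k) (w0 : Omega)
  (p : 'I_k -> Omega -> R) (G : {ffun 'I_k -> Omega} -> Omega -> R) :
  (forall i w, 0 <= p i w) -> (forall i, \sum_w p i w = 1) -> (forall r w, 0 <= G r w) ->
  \sum_(t : {ffun 'I_k -> Omega}) G (padf j w0 t) (t j) * \prod_(i < k | (j < i)%N) p i (t i)
  <= \sum_r \sum_w G r w.
Proof.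
move=> p0 p1 G0.
have E : forall t, G (padf j w0 t) (t j) =
   \sum_r \sum_w ((padf j w0 t == r) && (t j == w))%:R * G r w.
  move=> t; rewrite (bigD1 (padf j w0 t)) //= [X in _ + X]big1 => [|r Hr]; last first.
    by rewrite big1 // => w _; rewrite eq_sym (negbTE Hr) mul0r.
  rewrite addr0 (bigD1 (t j)) //= [X in _ + X]big1 => [|w Hw]; last by rewrite eq_sym (negbTE Hw) andbF mul0r.
  by rewrite !eqxx mul1r addr0.
under eq_bigr => t _ do rewrite E big_distrl /=.
rewrite exchange_big; apply: ler_sum => r _.
under eq_bigr => t _ do rewrite big_distrl /=.
rewrite exchange_big; apply: ler_sum => w _.
under eq_bigr => t _ do rewrite mulrAC mulrC.
rewrite -big_distrr /=.
apply: ler_piMr => //.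
pose d (i : 'I_k) (th : Omega) : R := if (i < j)%N then (th == r i)%:R else if i == j then (th == w)%:R else p i th.
have d0 : forall i th, 0 <= d i th.
  by move=> i th; rewrite /d; case: ifP => _; [|case: ifP => _]; rewrite ?ler0n ?p0.
have P1 : \prod_i \sum_th d i th = 1 :> R.
  rewrite big1 // => i _; rewrite /d; case: (i < j)%N; first exact: sum_ind.
  case: (i == j); [exact: sum_ind | exact: p1].
rewrite -[X in _ <= X]P1 bigA_distr_bigA /=; apply: ler_sum => t _.
case H: (_ && _); last by rewrite mul0r; apply: prodr_ge0.
move/andP: H => [/eqP Er /eqP Ew].
rewrite mul1r big_mkcond /= le_eqVlt; apply/orP; left; apply/eqP.
apply: eq_bigr => i _; rewrite /d.
case: (ltnP i j) => [ij|ji].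
  by rewrite -Er ffunE ij eqxx ltnNge (ltnW ij).
case: eqP => [-> | nij]; first by rewrite ltnn Ew eqxx.
have -> : (j < i)%N by rewrite ltn_neqAle ji andbT; apply/eqP => /val_inj /esym.
done.
Qed.

Lemma pythag (R : realType) (I : finType) (a b : I -> R) :
  (forall i, 0 <= b i) -> (forall i, b i = 0 -> a i = 0) ->
  \sum_i b i * (a i / b i - (\sum_i a i) / (\sum_i b i)) ^+ 2 =
  \sum_i a i ^+ 2 / b i - (\sum_i a i) ^+ 2 / (\sum_i b i).
Proof.
move=> b0 ab.
set A := \sum_i a i; set B := \sum_i b i; set c := A / B.
have E : forall i, b i * (a i / b i - c) ^+ 2 = a i ^+ 2 / b i + (- (2 * c)) * a i + c ^+ 2 * b i.
  move=> i; have [bi0|bi0] := eqVneq (b i) 0.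
    by rewrite bi0 (ab _ bi0); ring.
  by field.
under eq_bigr do rewrite E.
rewrite !big_split /= -!big_distrr /= -/A -/B.
have [B0|B0] := eqVneq B 0.
  by rewrite /c B0 invr0 !mulr0; ring.
rewrite /c; field; done.
Qed.

Lemma swap_sum (R : realType) (k n : nat) (j : 'I_k) (h : {ffun 'I_k -> 'I_n} -> 'I_n -> R) :
  (forall (xs xs' : {ffun 'I_k -> 'I_n}) x, (forall i, i != j -> xs i = xs' i) -> h xs x = h xs' x) ->
  \sum_xs \sum_x h xs x = n%:R * \sum_xs h xs (xs j).
Proof.
move=> hinv.
pose upd (xs : {ffun 'I_k -> 'I_n}) (x : 'I_n) := [ffun i => if i == j then x else xs i].
pose Psi (p : {ffun 'I_k -> 'I_n} * 'I_n) := (upd p.1 p.2, p.1 j).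
have PsiK : involutive Psi.
  case=> xs x; rewrite /Psi /= /upd; congr pair; last by rewrite ffunE eqxx.
  by apply/ffunP => i; rewrite !ffunE; case: eqP => // ->.
rewrite pair_bigA (reindex_inj (inv_inj PsiK)) /=.
rewrite (eq_bigr (fun p => h p.1 (p.1 j))); last first.
  by move=> p _; rewrite (hinv _ p.1 (p.1 j)) // => i /negbTE ij; rewrite /upd ffunE ij.
rewrite -(pair_bigA _ (fun xs (x : 'I_n) => h xs (xs j))) /=.
rewrite big_distrr /=; apply: eq_bigr => xs _.
by rewrite sumr_const card_ord mulr_natl.
Qed.

Lemma absle (R : realType) (l z : R) : 0 < l -> `|z| <= z ^+ 2 / (2 * l) + l / 2.
Proof.
move=> l0; rewrite -subr_ge0.
have -> : z ^+ 2 / (2 * l) + l / 2 - `|z| = (`|z| - l) ^+ 2 / (2 * l).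
  rewrite -[z ^+ 2](real_normK (num_real z)); field; by rewrite lt0r_neq0.
by apply: divr_ge0; [apply: sqr_ge0 | rewrite mulr_ge0 // ltW].
Qed.

Set Implicit Arguments. Unset Strict Implicit.

Section Main.
Variables (R : realType) (Omega : finType) (n : nat).
Local Notation state := {ffun 'I_n -> Omega}.
Variable mu : {ffun state -> R}.
Hypothesis mu0 : forall s, 0 <= mu s.

Lemma meas_ge0 (S : {set state}) : 0 <= meas mu S.
Proof. by apply: sumr_ge0 => s _. Qed.

Lemma meas_part (T : finType) (g : state -> T) (S : {set state}) :
  \sum_r meas mu (S :&: [set s | g s == r]) = meas mu S.
Proof.
rewrite /meas (partition_big g xpredT) //=; apply: eq_bigr => r _.
by apply: eq_bigl => s; rewrite !inE.
Qed.

Lemma meas_sub (S S' : {set state}) : S \subset S' -> meas mu S <= meas mu S'.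
Proof.
move=> /subsetP H; rewrite /meas [X in X <= _]big_mkcond [X in _ <= X]big_mkcond /=.
apply: ler_sum => s _; case: ifP => sS; first by rewrite (H _ sS).
by case: ifP.
Qed.

Lemma meas_subI (S S' : {set state}) : meas mu (S :&: S') <= meas mu S.
Proof. by apply: meas_sub; apply: subsetIl. Qed.

Lemma meas0_sub (S S' : {set state}) : meas mu S = 0 -> meas mu (S :&: S') = 0.
Proof. by move=> H; apply/eqP; rewrite eq_le meas_ge0 andbT -H meas_subI. Qed.



Definition Kx (S : {set state}) (T : finType) (g : state -> T) (x : 'I_n) : R :=
  \sum_r \sum_w meas mu (S :&: [set s | g s == r]) *
     (meas mu (S :&: [set s | g s == r] :&: [set s : state | s x == w]) /
        meas mu (S :&: [set s | g s == r])
      - meas mu (S :&: [set s : state | s x == w]) / meas mu S) ^+ 2.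

Lemma Kx_ge0 S (T : finType) (g : state -> T) x : 0 <= Kx S g x.
Proof.
by apply: sumr_ge0 => r _; apply: sumr_ge0 => w _; apply: mulr_ge0; [apply: meas_ge0|apply: sqr_ge0].
Qed.

Section Core.
Variables (S : {set state}) (k : nat) (xs : {ffun 'I_k -> 'I_n}) (w0 : Omega).
Hypothesis Mpos : 0 < meas mu S.
Local Notation M := (meas mu S).

Definition mg (x : 'I_n) (w : Omega) := meas mu (S :&: [set s : state | s x == w]) / M.

Lemma mg_ge0 x w : 0 <= mg x w.
Proof. by apply: divr_ge0; [apply: meas_ge0 | apply: ltW]. Qed.

Lemma mg_sum1 x : \sum_w mg x w = 1.
Proof.
rewrite /mg -big_distrl /= (meas_part (fun s : state => s x)) divff //.
by rewrite lt0r_neq0.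
Qed.

Definition Ej (j : nat) (t : {ffun 'I_k -> Omega}) : {set state} :=
  [set s : state | [forall i : 'I_k, (i < j)%N ==> (s (xs i) == t i)]].

Definition Hj (j : nat) (t : {ffun 'I_k -> Omega}) : R :=
  meas mu (S :&: Ej j t) / M * \prod_(i < k | (j <= i)%N) mg (xs i) (t i).

Lemma cm_eq t : cond_marg mu S xs t = Hj k t.
Proof.
rewrite /Hj big_pred0; last by move=> i; rewrite leqNgt ltn_ord.
rewrite mulr1 /cond_marg ffunE; congr (_ / _); rewrite /meas.
apply: eq_bigl => s; rewrite !inE; congr (_ && _).
by apply: eq_forallb => i; rewrite ltn_ord.
Qed.

Lemma pm_eq t : prod_marg mu S xs t = Hj 0 t.
Proof.
rewrite /Hj /prod_marg ffunE.
have -> : S :&: Ej 0 t = S.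
  by apply/setP => s; rewrite !inE; case: (s \in S) => //=; apply/forallP.
rewrite divff ?lt0r_neq0 // mul1r; apply: eq_bigr => i _.
by rewrite /mg /cond_marg1 ffunE /meas; congr (_ / _); apply: eq_bigl => s; rewrite !inE.
Qed.

Definition gfun (j : 'I_k) (s : state) : {ffun 'I_k -> Omega} :=
  [ffun i : 'I_k => if (i < j)%N then s (xs i) else w0].

Lemma EjG (j : 'I_k) t : Ej j t = [set s | gfun j s == padf j w0 t].
Proof.
apply/setP => s; rewrite !inE; apply/forallP/eqP => [H | H].
  apply/ffunP => i; rewrite !ffunE; case: ifP => // ij.
  by have := H i; rewrite ij => /eqP.
move=> i; apply/implyP => ij; have := congr1 (fun f : {ffun 'I_k -> Omega} => f i) H.
by rewrite !ffunE ij => ->.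
Qed.

Lemma Ej1 (j : 'I_k) t : Ej j.+1 t = Ej j t :&: [set s : state | s (xs j) == t j].
Proof.
apply/setP => s; rewrite !inE; apply/forallP/andP => [H|[/forallP H1 H2]].
  split; last by have := H j; rewrite ltnSn.
  by apply/forallP => i; apply/implyP => ij; have := H i; rewrite ltnS (ltnW ij).
move=> i; apply/implyP; rewrite ltnS leq_eqVlt => /orP [/eqP ij | ij].
  by have -> : i = j by apply: val_inj.
by have := H1 i; rewrite ij.
Qed.


Lemma Hdiff (j : 'I_k) t :
  Hj j.+1 t - Hj j t =
  (meas mu (S :&: Ej j t :&: [set s : state | s (xs j) == t j]) / M
   - meas mu (S :&: Ej j t) / M * mg (xs j) (t j)) *
  \prod_(i < k | (j < i)%N) mg (xs i) (t i).
Proof.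
have P : forall (F : 'I_k -> R), \prod_(i < k | (j <= i)%N) F i = F j * \prod_(i < k | (j < i)%N) F i.
  move=> F; rewrite (bigD1 j) //=; congr (_ * _); apply: eq_bigl => i.
  by rewrite ltn_neqAle andbC eq_sym.
rewrite /Hj Ej1 setIA P; ring.
Qed.

Lemma tv_step (j : 'I_k) (lam : R) : 0 < lam ->
  2^-1 * \sum_t `|Hj j.+1 t - Hj j t| <=
  Kx S (gfun j) (xs j) / (4 * lam * M) + lam * #|Omega|%:R / 4.
Proof.
move=> l0.
have M0 : M != 0 by rewrite lt0r_neq0.
have l0' : lam != 0 by rewrite lt0r_neq0.
pose G r w := meas mu (S :&: [set s | gfun j s == r]) / M *
  ((meas mu (S :&: [set s | gfun j s == r] :&: [set s : state | s (xs j) == w]) /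
     meas mu (S :&: [set s | gfun j s == r]) - mg (xs j) w) ^+ 2 / (2 * lam) + lam / 2).
have G0 : forall r w, 0 <= G r w.
  move=> r w; apply: mulr_ge0; first by apply: divr_ge0; [apply: meas_ge0|apply: ltW].
  apply: addr_ge0; first by apply: divr_ge0; [apply: sqr_ge0| rewrite mulr_ge0 // ltW].
  by apply: divr_ge0 => //; apply: ltW.
have step1 : \sum_t `|Hj j.+1 t - Hj j t| <=
    \sum_t G (padf j w0 t) (t j) * \prod_(i < k | (j < i)%N) mg (xs i) (t i).
  apply: ler_sum => t _; rewrite Hdiff normrM.
  have Pge0 : 0 <= \prod_(i < k | (j < i)%N) mg (xs i) (t i).
    by apply: prodr_ge0 => i _; apply: mg_ge0.
  rewrite (ger0_norm Pge0); apply: ler_wpM2r => //.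
  rewrite /G -EjG.
  set B := meas mu (S :&: Ej j t).
  set A := meas mu (S :&: Ej j t :&: [set s : state | s (xs j) == t j]).
  have [B0|B0] := eqVneq B 0.
    have A0 : A = 0 by apply: meas0_sub.
    by rewrite A0 B0 !mul0r subrr normr0.
  have -> : A / M - B / M * mg (xs j) (t j) = B / M * (A / B - mg (xs j) (t j)).
 by field; rewrite B0 M0.
  rewrite normrM ger0_norm; last by apply: divr_ge0; [apply: meas_ge0|apply: ltW].
  apply: ler_wpM2l; first by apply: divr_ge0; [apply: meas_ge0|apply: ltW].
  exact: absle.
have step2 := @pad_sum R Omega k j w0 (fun i => mg (xs i)) G (fun i w => mg_ge0 (xs i) w)
   (fun i => mg_sum1 (xs i)) G0.
have step3 : \sum_r \sum_w G r w = Kx S (gfun j) (xs j) / (2 * lam * M) + lam * #|Omega|%:R / 2.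
  have E : forall r w, G r w =
    meas mu (S :&: [set s | gfun j s == r]) *
     (meas mu (S :&: [set s | gfun j s == r] :&: [set s : state | s (xs j) == w]) /
       meas mu (S :&: [set s | gfun j s == r]) - mg (xs j) w) ^+ 2 / (2 * lam * M)
    + meas mu (S :&: [set s | gfun j s == r]) / M * (lam / 2).
    move=> r w; rewrite /G; set z := (X in X ^+ 2); by field; rewrite M0 l0'.
  under eq_bigr => r _ do under eq_bigr => w _ do rewrite E.
  under eq_bigr => r _ do rewrite big_split /=.
  rewrite big_split /=; congr (_ + _).
    rewrite /Kx mulr_suml; apply: eq_bigr => r _; rewrite mulr_suml; apply: eq_bigr => w _.
    by rewrite /mg.
  rewrite (eq_bigr (fun r => meas mu (S :&: [set s | gfun j s == r]) / M * (lam / 2) * #|Omega|%:R)); last first.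
    by move=> r _; rewrite sumr_const mulr_natr.
  rewrite -big_distrl -big_distrl /= -big_distrl /= (meas_part (gfun j)) divff //.
  by rewrite mul1r mulrAC.
rewrite step3 in step2.
have H := le_trans step1 step2.
have h2 : 0 <= 2^-1 :> R by rewrite invr_ge0 ler0n.
apply: le_trans (ler_wpM2l h2 H) _.
rewrite le_eqVlt; apply/orP; left; apply/eqP; field.
by rewrite l0' M0.
Qed.



Lemma tv_bound (lam : R) : 0 < lam ->
  tv (cond_marg mu S xs) (prod_marg mu S xs) <=
  \sum_(j < k) (Kx S (gfun j) (xs j) / (4 * lam * M) + lam * #|Omega|%:R / 4).
Proof.
move=> l0; rewrite /tv.
have h2 : 0 <= 2^-1 :> R by rewrite invr_ge0 ler0n.
apply: (@le_trans _ _ (2^-1 * \sum_t \sum_(j < k) `|Hj j.+1 t - Hj j t|)).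
  apply: ler_wpM2l => //; apply: ler_sum => t _.
  rewrite cm_eq pm_eq -(telescope_sumr (fun j => Hj j t) (leq0n k)) big_mkord.
  exact: ler_norm_sum.
rewrite exchange_big big_distrr /=; apply: ler_sum => j _.
exact: tv_step.
Qed.

End Core.

Lemma Kx_ext S (T : finType) (g g' : state -> T) x : g =1 g' -> Kx S g x = Kx S g' x.
Proof.
move=> H; have E : forall r, [set s | g s == r] = [set s | g' s == r].
  by move=> r; apply/setP => s; rewrite !inE H.
by rewrite /Kx; apply: eq_bigr => r _; rewrite E.
Qed.

Lemma bad_inc (eps : R) k S w0 : 0 < eps -> (0 < n)%N -> (0 < k)%N -> (0 < #|Omega|)%N ->
  0 < meas mu S ->
  eps <= (n%:R ^+ k)^-1 * \sum_(xs : {ffun 'I_k -> 'I_n}) tv (cond_marg mu S xs) (prod_marg mu S xs) ->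
  3 * eps ^+ 2 / (k%:R * #|Omega|%:R) * meas mu S <=
  (n%:R ^+ k)^-1 * \sum_(xs : {ffun 'I_k -> 'I_n}) \sum_(j < k) (n%:R^-1 * \sum_x Kx S (gfun xs w0 j) x).
Proof.
move=> e0 n0 k0 q0 Mpos Hbad.
set M := meas mu S; set q : R := #|Omega|%:R.
have qpos : 0 < q by rewrite ltr0n.
have kpos : 0 < k%:R :> R by rewrite ltr0n.
have npos : 0 < n%:R :> R by rewrite ltr0n.
set lam := eps / (k%:R * q).
have l0 : 0 < lam by apply: divr_gt0 => //; apply: mulr_gt0.
have nk0 : 0 < n%:R ^+ k :> R by apply: exprn_gt0.
pose K (xs : {ffun 'I_k -> 'I_n}) (j : 'I_k) := Kx S (gfun xs w0 j) (xs j).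
have H1 : \sum_(xs : {ffun 'I_k -> 'I_n}) tv (cond_marg mu S xs) (prod_marg mu S xs) <=
   \sum_(xs : {ffun 'I_k -> 'I_n}) \sum_(j < k) (K xs j / (4 * lam * M) + lam * q / 4).
  by apply: ler_sum => xs _; apply: tv_bound.
have E1 : \sum_(xs : {ffun 'I_k -> 'I_n}) \sum_(j < k) (K xs j / (4 * lam * M) + lam * q / 4) =
   (\sum_(xs : {ffun 'I_k -> 'I_n}) \sum_(j < k) K xs j) / (4 * lam * M) + n%:R ^+ k * (k%:R * (lam * q / 4)).
  under eq_bigr => xs _ do rewrite big_split /=.
  rewrite big_split /= mulr_suml; congr (_ + _).
    by apply: eq_bigr => xs _; rewrite mulr_suml.
  rewrite sumr_const card_ffun !card_ord -[_ *+ (n ^ k)]mulr_natl natrX; congr (_ * _).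
  by rewrite sumr_const card_ord -[_ *+ k]mulr_natl.
have E2 : \sum_(xs : {ffun 'I_k -> 'I_n}) \sum_(j < k) (n%:R^-1 * \sum_x Kx S (gfun xs w0 j) x) =
   \sum_(xs : {ffun 'I_k -> 'I_n}) \sum_(j < k) K xs j.
  rewrite exchange_big [RHS]exchange_big; apply: eq_bigr => j _ /=.
  rewrite -big_distrr /= (@swap_sum R k n j (fun xs x => Kx S (gfun xs w0 j) x)).
    by rewrite mulrA mulVf ?mul1r // lt0r_neq0.
  move=> xs xs' x H; apply: Kx_ext => s; apply/ffunP => i; rewrite !ffunE.
  case: ifP => // ij; rewrite H //; apply/eqP => ij'; move: ij; by rewrite ij' ltnn.
rewrite E2.
set X := \sum_(xs : {ffun 'I_k -> 'I_n}) \sum_(j < k) K xs j.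
have nki : 0 <= (n%:R ^+ k)^-1 :> R by rewrite invr_ge0 ltW.
have H2 := le_trans Hbad (ler_wpM2l nki H1).
rewrite E1 in H2.
have E3 : (n%:R ^+ k)^-1 * (X / (4 * lam * M) + n%:R ^+ k * (k%:R * (lam * q / 4))) =
   ((n%:R ^+ k)^-1 * X) / (4 * lam * M) + eps / 4.
  rewrite /lam; field.
  by rewrite !lt0r_neq0 //; apply: exprn_gt0.
rewrite E3 in H2.
set Y := (n%:R ^+ k)^-1 * X in H2 *.
have H3 : 3 * eps / 4 <= Y / (4 * lam * M) by lra.
have P : 0 <= 4 * lam * M.
  by apply: mulr_ge0; [apply: mulr_ge0 => //; apply: ltW | apply: ltW].
have := ler_wpM2r P H3.
have -> : Y / (4 * lam * M) * (4 * lam * M) = Y.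
  by field; rewrite !lt0r_neq0.
have -> : 3 * eps / 4 * (4 * lam * M) = 3 * eps ^+ 2 / (k%:R * q) * M.
  by rewrite /lam; field; rewrite !lt0r_neq0.
done.
Qed.




Definition Fset (T : finType) (f : state -> T) (t : T) : {set state} := [set s | f s == t].

Definition Phi (T : finType) (f : state -> T) : R :=
  n%:R^-1 * \sum_x \sum_w \sum_t
    meas mu (Fset f t :&: [set s : state | s x == w]) ^+ 2 / meas mu (Fset f t).

Lemma Phi_ge0 (T : finType) (f : state -> T) : 0 <= Phi f.
Proof.
apply: mulr_ge0; first by rewrite invr_ge0 ler0n.
apply: sumr_ge0 => x _; apply: sumr_ge0 => w _; apply: sumr_ge0 => t _.
by apply: divr_ge0; [apply: sqr_ge0 | apply: meas_ge0].
Qed.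

Lemma meas_setT_sum (T : finType) (f : state -> T) :
  \sum_t meas mu (Fset f t) = meas mu setT.
Proof.
rewrite -(meas_part f setT); apply: eq_bigr => t _.
by rewrite setTI.
Qed.

Lemma Phi_le1 (T : finType) (f : state -> T) : (0 < n)%N -> meas mu setT = 1 -> Phi f <= 1.
Proof.
move=> n0 m1.
have H : forall t x, \sum_w meas mu (Fset f t :&: [set s : state | s x == w]) ^+ 2 / meas mu (Fset f t)
     <= meas mu (Fset f t).
  move=> t x; rewrite -[X in _ <= X](meas_part (fun s : state => s x) (Fset f t)).
  apply: ler_sum => w _.
  set a := meas mu _; set b := meas mu (Fset f t).
  have a0 : 0 <= a by apply: meas_ge0.
  have ab : a <= b by apply: meas_subI.
  have [b0|b0] := eqVneq b 0; first by rewrite b0 invr0 mulr0.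
  have bpos : 0 < b by rewrite lt0r b0 meas_ge0.
  rewrite expr2 -mulrA; apply: ler_piMr => //.
  by rewrite ler_pdivrMr // mul1r.
rewrite /Phi; apply: (@le_trans _ _ (n%:R^-1 * \sum_(x < n) (1 : R))).
  apply: ler_wpM2l; first by rewrite invr_ge0 ler0n.
  apply: ler_sum => x _; rewrite exchange_big -m1 -(meas_setT_sum f).
  by apply: ler_sum => t _; apply: H.
by rewrite sumr_const card_ord -mulr_natr mul1r mulVf // pnatr_eq0 -lt0n.
Qed.

Lemma Phi_inc (T T' : finType) (f : state -> T) (g : state -> T') :
  Phi (fun s => (f s, g s)) - Phi f = n%:R^-1 * \sum_t \sum_x Kx (Fset f t) g x.
Proof.
have EF : forall t r, Fset (fun s => (f s, g s)) (t, r) = Fset f t :&: [set s | g s == r].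
  by move=> t r; apply/setP => s; rewrite !inE xpair_eqE.
rewrite /Phi -mulrBr; congr (_ * _).
rewrite -sumrB [RHS]exchange_big; apply: eq_bigr => x _ /=.
rewrite /Kx; symmetry; under eq_bigr => t _ do rewrite exchange_big.
rewrite exchange_big; symmetry.
rewrite -sumrB; apply: eq_bigr => w _.
rewrite (eq_bigr (fun p => meas mu (Fset f p.1 :&: [set s | g s == p.2] :&: [set s : state | s x == w]) ^+ 2
     / meas mu (Fset f p.1 :&: [set s | g s == p.2]))); last first.
  by case=> t r _ /=; rewrite EF.
rewrite -(pair_bigA _ (fun t r => meas mu (Fset f t :&: [set s | g s == r] :&: [set s : state | s x == w]) ^+ 2
     / meas mu (Fset f t :&: [set s | g s == r]))) /=.
rewrite -sumrB; apply: eq_bigr => t _.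
have Sa : \sum_r meas mu (Fset f t :&: [set s | g s == r] :&: [set s : state | s x == w]) =
    meas mu (Fset f t :&: [set s : state | s x == w]).
  by rewrite -(meas_part g); apply: eq_bigr => r _; rewrite setIAC.
rewrite -Sa -(meas_part g (Fset f t)).
symmetry; apply: pythag => r; first exact: meas_ge0.
exact: meas0_sub.
Qed.


Definition Dval (k : nat) (S : {set state}) : R :=
  (n%:R ^+ k)^-1 * \sum_(xs : {ffun 'I_k -> 'I_n}) tv (cond_marg mu S xs) (prod_marg mu S xs).

Definition state_b (eps : R) (k : nat) (S : {set state}) : bool :=
  (0 < meas mu S) && (Dval k S < eps).

Definition badmass (eps : R) (k : nat) (T : finType) (f : state -> T) : R :=
  \sum_(t | ~~ state_b eps k (Fset f t)) meas mu (Fset f t).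

Lemma step_exists (eps : R) (k : nat) (w0 : Omega) (T : finType) (f : state -> T) :
  0 < eps -> (0 < n)%N -> (0 < k)%N -> (0 < #|Omega|)%N ->
  eps / 2 <= badmass eps k f ->
  exists xs : {ffun 'I_k -> 'I_n}, exists j : 'I_k,
    3 * eps ^+ 2 / (k%:R * #|Omega|%:R) * eps / (4 * k%:R) <=
      Phi (fun s => (f s, gfun xs w0 j s)) - Phi f.
Proof.
move=> e0 n0 k0 q0 Hb.
set c := 3 * eps ^+ 2 / (k%:R * #|Omega|%:R).
have kpos : 0 < k%:R :> R by rewrite ltr0n.
have npos : 0 < n%:R :> R by rewrite ltr0n.
have nk0 : 0 < n%:R ^+ k :> R by apply: exprn_gt0.
have c0 : 0 < c.
  apply: divr_gt0; first by rewrite mulr_gt0 // exprn_gt0.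
  by rewrite mulr_gt0 // ltr0n.
pose Q (t : T) := (n%:R ^+ k)^-1 * \sum_(xs : {ffun 'I_k -> 'I_n})
     \sum_(j < k) (n%:R^-1 * \sum_x Kx (Fset f t) (gfun xs w0 j) x).
have Q0 : forall t, 0 <= Q t.
  move=> t; apply: mulr_ge0; first by rewrite invr_ge0 ltW.
  apply: sumr_ge0 => xs _; apply: sumr_ge0 => j _; apply: mulr_ge0; first by rewrite invr_ge0 ler0n.
  by apply: sumr_ge0 => x _; apply: Kx_ge0.
have Htot : (n%:R ^+ k)^-1 * \sum_(xs : {ffun 'I_k -> 'I_n}) \sum_(j < k)
     (Phi (fun s => (f s, gfun xs w0 j s)) - Phi f) = \sum_t Q t.
  under eq_bigr => xs _ do under eq_bigr => j _ do rewrite Phi_inc big_distrr /=.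
  under eq_bigr => xs _ do rewrite exchange_big /=.
  rewrite exchange_big big_distrr /=; apply: eq_bigr => t _.
  rewrite /Q; congr (_ * _); apply: eq_bigr => xs _; apply: eq_bigr => j _.
have Hlow : c * (eps / 2) <= \sum_t Q t.
  apply: (le_trans (ler_wpM2l (ltW c0) Hb)).
  rewrite /badmass mulr_sumr big_mkcond /=; apply: ler_sum => t _.
  case: ifP => // /negP Hbad.
  have [m0|mpos] := eqVneq (meas mu (Fset f t)) 0; first by rewrite m0 mulr0.
  apply: bad_inc => //; first by rewrite lt0r mpos meas_ge0.
  rewrite leNgt; apply/negP => Hlt; apply: Hbad.
  by rewrite /state_b Hlt andbT lt0r mpos meas_ge0.
set d := c * eps / (4 * k%:R).
have [/existsP [xs /existsP [j H]]|/existsPn Hn] := boolP [exists xs : {ffun 'I_k -> 'I_n},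
    [exists j : 'I_k, d <= Phi (fun s => (f s, gfun xs w0 j s)) - Phi f]].
  by exists xs, j.
exfalso.
have Hup : (n%:R ^+ k)^-1 * \sum_(xs : {ffun 'I_k -> 'I_n}) \sum_(j < k)
     (Phi (fun s => (f s, gfun xs w0 j s)) - Phi f) <= c * eps / 4.
  apply: (@le_trans _ _ ((n%:R ^+ k)^-1 * \sum_(xs : {ffun 'I_k -> 'I_n}) \sum_(j < k) d)).
    apply: ler_wpM2l; first by rewrite invr_ge0 ltW.
    apply: ler_sum => xs _; apply: ler_sum => j _.
    have := Hn xs; move=> /existsPn /(_ j); rewrite -ltNge => H; exact: ltW.
  rewrite sumr_const sumr_const card_ffun !card_ord -[_ *+ (n ^ k)]mulr_natr -[d *+ k]mulr_natr natrX /d.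
  rewrite le_eqVlt; apply/orP; left; apply/eqP; field.
  by rewrite !lt0r_neq0.
have : c * (eps / 2) <= c * eps / 4 by rewrite -Htot in Hlow; exact: le_trans Hlow Hup.
have : 0 < c * eps by apply: mulr_gt0.
set z := c * eps; rewrite mulrA -/z.
move=> ? ?; lra.
Qed.



Lemma iter_lemma (eps : R) (k : nat) (w0 : Omega) (t : nat) :
  0 < eps -> (0 < n)%N -> (0 < k)%N -> (0 < #|Omega|)%N ->
  exists (T : finType) (f : state -> T),
   (#|T| <= (#|Omega| ^ k) ^ t)%N /\
   (badmass eps k f < eps / 2 \/
    t%:R * (3 * eps ^+ 2 / (k%:R * #|Omega|%:R) * eps / (4 * k%:R)) <= Phi f).
Proof.
move=> e0 n0 k0 q0; elim: t => [|t [T [f [Hc H]]]].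
  exists unit, (fun _ => tt); split; first by rewrite card_unit.
  by right; rewrite mul0r; apply: Phi_ge0.
set d := 3 * eps ^+ 2 / (k%:R * #|Omega|%:R) * eps / (4 * k%:R) in H *.
have Qpos : (0 < #|Omega| ^ k)%N by rewrite expn_gt0 q0.
have [Hlt|Hge] := boolP (badmass eps k f < eps / 2).
  exists T, f; split; last by left.
  by apply: leq_trans Hc _; rewrite leq_pexp2l.
rewrite -leNgt in Hge.
have Hr : t%:R * d <= Phi f.
  by case: H => // Hl; exfalso; move: Hge; rewrite leNgt Hl.
have [xs [j Hj]] := step_exists w0 e0 n0 k0 q0 Hge.
exists (prod T {ffun 'I_k -> Omega}), (fun s => (f s, gfun xs w0 j s)); split.
  by rewrite card_prod card_ffun !card_ord expnSr leq_mul.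
right; rewrite -[t.+1]addn1 natrD mulrDl mul1r.
by move: Hj; rewrite -/d => Hj; lra.
Qed.

End Main.

Unset Implicit Arguments. Set Strict Implicit.

Theorem corollary2p2 (R : realType) (Omega : finType) :
  (0 < #|Omega|)%N ->
  forall (eps : R), 0 < eps ->
  forall k : nat, (2 <= k)%N ->
  exists eta : R, 0 < eta /\
    forall n : nat, 1 / eta < n%:R ->
    forall mu : {ffun {ffun 'I_n -> Omega} -> R}, is_prob mu ->
    exists (N : nat) (S : 'I_N -> {set {ffun 'I_n -> Omega}}),
      (forall i j : 'I_N, i != j -> [disjoint S i & S j]) /\
      (forall i : 'I_N, is_state mu eps k (S i)) /\
      (forall i : 'I_N, eta <= meas mu (S i)) /\
      1 - eps <= \sum_(i < N) meas mu (S i).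
Proof.
move=> q0 eps e0 k k2.
have k0 : (0 < k)%N by apply: leq_trans k2.
have kpos : 0 < k%:R :> R by rewrite ltr0n.
have qpos : 0 < #|Omega|%:R :> R by rewrite ltr0n.
set c := 3 * eps ^+ 2 / (k%:R * #|Omega|%:R).
set d := c * eps / (4 * k%:R).
have c0 : 0 < c.
  apply: divr_gt0; first by rewrite mulr_gt0 // exprn_gt0.
  by rewrite mulr_gt0.
have d0 : 0 < d by apply: divr_gt0; apply: mulr_gt0 => //; rewrite ltr0n.
set L := (Num.trunc (d^-1)).+1.
have HL : 1 < L%:R * d.
  have := truncnS_gt (d^-1); rewrite -/L => H.
  by rewrite -(ltr_pM2r d0) mulVf ?lt0r_neq0 in H.
set Mb := ((#|Omega| ^ k) ^ L)%N.
have Mb0 : (0 < Mb)%N by rewrite expn_gt0 expn_gt0 q0.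
have Mbpos : 0 < Mb%:R :> R by rewrite ltr0n.
set eta := eps / (2 * Mb%:R).
have eta0 : 0 < eta by apply: divr_gt0; rewrite ?mulr_gt0.
exists eta; split => //.
move=> n Hn mu [mu0 mu1].
have n0 : (0 < n)%N.
  by rewrite -(ltr0n R); apply: lt_trans Hn; rewrite mul1r invr_gt0.
case/card_gt0P: (q0) => w0 _.
have mT : meas mu setT = 1 by rewrite -mu1 /meas; apply: eq_bigl => x; rewrite inE.
have [T [f [Hc [Hb|Hphi]]]] := iter_lemma mu0 w0 L e0 n0 k0 q0; last first.
  have := Phi_le1 mu0 f n0 mT; rewrite -/c -/d => H1.
  by exfalso; move: (le_trans Hphi H1) HL; rewrite -/c -/d => ??; lra.
set Gd := [set t | state_b mu eps k (Fset f t) && (eta <= meas mu (Fset f t))].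
exists #|Gd|, (fun i => Fset f (enum_val i)).
split.
  move=> i j ij; rewrite disjoint_subset; apply/subsetP => s; rewrite /Fset !inE => /eqP ->.
  by apply: contra ij => /eqP E; apply/eqP; apply: enum_val_inj.
split.
  move=> i; have := enum_valP i; rewrite inE => /andP [/andP [H1 H2] _].
  by split.
split.
  by move=> i; have := enum_valP i; rewrite inE => /andP [_ H].
rewrite -(big_enum_val (fun t => meas mu (Fset f t))) /=.
have Tot : \sum_t meas mu (Fset f t) = 1 by rewrite meas_setT_sum.
rewrite (bigID (fun t => t \in Gd)) /= in Tot.
have Hnot : \sum_(t | t \notin Gd) meas mu (Fset f t) <= badmass mu eps k f + #|T|%:R * eta.
  rewrite /badmass big_mkcond [X in _ <= X + _]big_mkcond /=.
  have -> : #|T|%:R * eta = \sum_(t : T) eta by rewrite sumr_const mulr_natl.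
  rewrite -big_split /=.
  apply: ler_sum => t _.
  have m0 : 0 <= meas mu (Fset f t) by apply: meas_ge0.
  rewrite inE; case: (boolP (state_b mu eps k (Fset f t))) => Hs /=.
    case: (boolP (eta <= meas mu (Fset f t))) => Hle /=; first by rewrite add0r ltW.
    by rewrite add0r ltW // ltNge.
  by rewrite -{1}[meas mu (Fset f t)]addr0 lerD2l ltW.
have HT : #|T|%:R * eta <= eps / 2.
  have -> : eps / 2 = Mb%:R * eta by rewrite /eta; field; rewrite lt0r_neq0.
  by apply: ler_wpM2r; [apply: ltW | rewrite ler_nat].
move: Tot Hnot HT Hb.
set A := \sum_(t in Gd) _; set B := \sum_(t | _) _; set C := badmass _ _ _ _; set D := _ * eta.
move=> ????; lra.
Qed.
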